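(* Let $\omega_c>0$. For $\nu>0$, $k\in\mathbb Z^3$ and $t\ge0$ define $$S(t,k)=\exp\Big[-\nu\int_0^t|k_3|^2\Big(\frac{1-e^{-\nu(t-s)}}{\nu}\Big)^2ds\Big]\exp\Big[-\frac{\nu|k_\perp|^2}{\nu^2+\omega_c^2}\int_0^t\Big(\big[1-\cos\omega_c(t-s)\,e^{-\nu(t-s)}\big]^2+e^{-2\nu(t-s)}\sin^2\omega_c(t-s)\Big)ds\Big].$$ Then there exist $\nu_1>0$ and $\delta_0>0$ such that for all $\nu\in(0,\nu_1)$ and all $k$ with $k_3\neq0$, the function $t\mapsto S(t,k)$ is strictly decreasing on $[0,\infty)$ and for all $t\ge0$ $$0<S(t,k)\le\exp\big(-\delta_0\min(\nu k_3^2t^3,\nu^{-1}k_3^2t)\big)\exp\big(-\delta_0\nu|k_\perp|^2\min(t^3,t)\big).$$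
   Context: $k_\perp=(k_1,k_2,0)$, $|k_\perp|^2=k_1^2+k_2^2$. $S$ is the collisional damping factor along the characteristics of the Fourier-transformed linearized Vlasov–Fokker–Planck equation in a uniform magnetic field with cyclotron frequency $\omega_c$ and collision frequency $\nu$. *)

(* Defs.v *)
From Stdlib Require Import Reals ZArith.
From Coquelicot Require Import Coquelicot.
Open Scope R_scope.

Definition integrand1 (nu : R) (k3 : Z) (t s : R) : R :=
  (IZR k3) ^ 2 * ((1 - exp (- nu * (t - s))) / nu) ^ 2.

Definition integrand2 (nu wc : R) (t s : R) : R :=
  (1 - cos (wc * (t - s)) * exp (- nu * (t - s))) ^ 2
  + exp (-2 * nu * (t - s)) * (sin (wc * (t - s))) ^ 2.

Definition kperp2 (k1 k2 : Z) : R := (IZR k1) ^ 2 + (IZR k2) ^ 2.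

Definition S (nu wc : R) (k1 k2 k3 : Z) (t : R) : R :=
  exp (- nu * RInt (integrand1 nu k3 t) 0 t)
  * exp (- (nu * kperp2 k1 k2 / (nu ^ 2 + wc ^ 2))
           * RInt (integrand2 nu wc t) 0 t).

(* Main.v *)
Require Import Defs.
From Stdlib Require Import Reals ZArith Lra Psatz.
From Coquelicot Require Import Coquelicot.
Open Scope R_scope.

Lemma subst_lem (F : R -> R) (t : R) : (forall x, continuous F x) ->
  RInt (fun s => F (t - s)) 0 t = RInt F 0 t.
Proof.
  intros HF.
  assert (Ex : forall a b, ex_RInt F a b) by (intros; apply (@ex_RInt_continuous R_CompleteNormedModule); auto).
  pose proof (RInt_comp_lin F (-1) t 0 t (Ex _ _)) as E.
  replace (-1*0+t) with t in E by ring. replace (-1*t+t) with 0 in E by ring.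
  rewrite <- (opp_RInt_swap F 0 t (Ex _ _)) in E.
  unfold scal, opp in E; simpl in E; unfold mult in E; simpl in E.
  assert (E2 : RInt (fun y => -1 * F (-1 * y + t)) 0 t = - (RInt (fun s => F (t - s)) 0 t)).
  { rewrite <- (RInt_opp (V:=R_CompleteNormedModule)).
    - apply RInt_ext. intros x _. unfold opp; simpl. replace (-1 * x + t) with (t - x) by ring. ring.
    - apply (@ex_RInt_continuous R_CompleteNormedModule). intros z _.
      apply (continuous_comp (fun s => t - s) F).
      + apply (@ex_derive_continuous R_AbsRing R_NormedModule); auto_derive; auto.
      + apply HF. }
  rewrite E2 in E. lra.
Qed.

Lemma mono_lb (F : R -> R) a m b c : a <= m <= b -> (forall x, continuous F x) ->
  (forall x, a <= x <= b -> 0 <= F x) -> (forall x, m <= x <= b -> c <= F x) ->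
  (b - m) * c <= RInt F a b.
Proof.
  intros Hm HF H0 Hc.
  assert (Ex : forall a b, ex_RInt F a b) by (intros; apply (@ex_RInt_continuous R_CompleteNormedModule); auto).
  rewrite <- (RInt_Chasles F a m b (Ex _ _) (Ex _ _)).
  unfold plus; simpl.
  assert (0 <= RInt F a m).
  { apply RInt_ge_0; [lra | auto | intros; apply H0; lra]. }
  assert ((b - m) * c <= RInt F m b).
  { replace ((b-m)*c) with (RInt (fun _ => c) m b).
    - apply RInt_le; [lra | apply ex_RInt_const | auto | intros; apply Hc; lra].
    - rewrite RInt_const. reflexivity. }
  lra.
Qed.

Lemma one_m_exp x : 0 <= x -> 0 <= 1 - exp (- x) /\ x <= (1 - exp (-x)) * (1 + x).
Proof.
  intros Hx. pose proof (exp_ineq1_le x). pose proof (exp_pos x).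
  rewrite exp_Ropp.
  assert (/ exp x * exp x = 1) by (field; lra).
  assert (0 < / exp x) by (apply Rinv_0_lt_compat; lra).
  split; nra.
Qed.

Lemma xsin x : 0 <= x -> (2/15) * Rmin (x^3) x <= x - sin x.
Proof.
  intros Hx. destruct (Rle_dec x 2).
  - destruct (pre_sin_bound x 0 Hx ltac:(lra)) as [_ H].
    unfold sin_approx, sin_term in H. simpl in H.
    assert (x^3 * (4 - x^2) >= 0) by (apply Rle_ge; apply Rmult_le_pos; nra).
    assert (Rmin (x^3) x <= x^3) by apply Rmin_l.
    nra.
  - pose proof (SIN_bound x). assert (Rmin (x^3) x <= x) by apply Rmin_r. lra.
Qed.

Lemma exp_le x y : x <= y -> exp x <= exp y.
Proof. intros H. destruct H as [H|H]; [left; apply exp_increasing; auto | subst; lra]. Qed.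

Definition F1 nu (k3 : Z) u := (IZR k3) ^ 2 * ((1 - exp (- nu * u)) / nu) ^ 2.
Definition G2 nu wc u := (1 - cos (wc * u) * exp (- nu * u)) ^ 2
  + exp (-2 * nu * u) * (sin (wc * u)) ^ 2.

Lemma F1_cont nu k3 : nu <> 0 -> forall x, continuous (F1 nu k3) x.
Proof. intros Hn x. apply (@ex_derive_continuous R_AbsRing R_NormedModule).
  unfold F1. auto_derive. auto. Qed.

Lemma G2_cont nu wc : forall x, continuous (G2 nu wc) x.
Proof. intros x. apply (@ex_derive_continuous R_AbsRing R_NormedModule).
  unfold G2. auto_derive. auto. Qed.

Lemma G2_eq nu wc u : G2 nu wc u =
  (1 - exp (- nu * u))^2 + 2 * exp (- nu * u) * (1 - cos (wc * u)).
Proof.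
  unfold G2. replace (-2 * nu * u) with (- nu * u + - nu * u) by ring.
  rewrite exp_plus. pose proof (sin2_cos2 (wc * u)). unfold Rsqr in H.
  nra.
Qed.

Lemma G2_ge nu wc u : (1 - exp (- nu * u))^2 <= G2 nu wc u.
Proof.
  rewrite G2_eq. pose proof (exp_pos (- nu * u)). pose proof (COS_bound (wc * u)).
  nra.
Qed.

Lemma F1_mono nu k3 x y : 0 < nu -> 0 <= x <= y -> F1 nu k3 x <= F1 nu k3 y.
Proof.
  intros Hn Hxy. unfold F1.
  assert (exp (- nu * y) <= exp (- nu * x)) by (apply exp_le; nra).
  assert (exp (- nu * x) <= 1) by (rewrite <- exp_0; apply exp_le; nra).
  apply Rmult_le_compat_l; [apply pow2_ge_0|].
  apply pow_incr. split.
  - apply Rdiv_le_0_compat; lra.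
  - unfold Rdiv. apply Rmult_le_compat_r; [left; apply Rinv_0_lt_compat; lra | lra].
Qed.

Lemma F1_nonneg nu k3 x : 0 <= F1 nu k3 x.
Proof. unfold F1. apply Rmult_le_pos; apply pow2_ge_0. Qed.

Lemma G2_nonneg nu wc x : 0 <= G2 nu wc x.
Proof. unfold G2. pose proof (exp_pos (-2 * nu * x)).
  apply Rplus_le_le_0_compat; [apply pow2_ge_0|]. apply Rmult_le_pos; [lra|apply pow2_ge_0]. Qed.

Lemma S_eq nu wc k1 k2 k3 t : nu <> 0 -> S nu wc k1 k2 k3 t =
  exp (- nu * RInt (F1 nu k3) 0 t) *
  exp (- (nu * kperp2 k1 k2 / (nu ^ 2 + wc ^ 2)) * RInt (G2 nu wc) 0 t).
Proof.
  intros Hn. unfold S.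
  change (integrand1 nu k3 t) with (fun s => F1 nu k3 (t - s)).
  change (integrand2 nu wc t) with (fun s => G2 nu wc (t - s)).
  rewrite (subst_lem (F1 nu k3)) by (apply F1_cont; auto).
  rewrite (subst_lem (G2 nu wc)) by (apply G2_cont; auto).
  reflexivity.
Qed.

Lemma key1 K t nu y : 0 < nu -> 0 <= K -> 0 <= t -> 0 <= y ->
  nu * t / 2 <= y * (1 + nu * t / 2) ->
  (1/32) * Rmin (nu * K * t^3) (K * t / nu) <= nu * ((t - t/2) * (K * (y / nu)^2)).
Proof.
  intros Hn HK Ht Hy Hxy.
  set (iv := / nu). assert (Hiv : nu * iv = 1) by (unfold iv; field; lra).
  assert (Hiv0 : 0 < iv) by (unfold iv; apply Rinv_0_lt_compat; lra).
  replace (nu * ((t - t/2) * (K * (y / nu)^2))) with (K * t * y^2 * iv / 2)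
    by (unfold iv; field; lra).
  replace (K * t / nu) with (K * t * iv) by (unfold iv; field; lra).
  assert (HKt : 0 <= K * t) by nra.
  destruct (Rle_dec (nu * t / 2) 1).
  - assert (y * (nu*t/2) <= y * 1) by (apply Rmult_le_compat_l; lra).
    assert (Hy2 : nu * t / 2 <= 2 * y) by lra.
    assert (Hy3 : (nu * t)^2 <= 16 * y^2).
    { assert (0 <= nu*t) by nra. replace ((nu*t)^2) with ((2 * (nu*t/2))^2) by field.
      replace (16 * y^2) with ((2*(2*y))^2) by ring. apply pow_incr; lra. }
    assert (Rmin (nu * K * t^3) (K * t * iv) <= nu * K * t^3) by apply Rmin_l.
    assert (nu * K * t^3 = K * t * (nu*t)^2 * iv) by (unfold iv; field; lra).
    assert (K * t * (nu*t)^2 * iv <= K * t * (16 * y^2) * iv).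
    { apply Rmult_le_compat_r; [lra|]. apply Rmult_le_compat_l; lra. }
    nra.
  - assert (Hy2 : 1/2 <= y) by nra.
    assert (Rmin (nu * K * t^3) (K * t * iv) <= K * t * iv) by apply Rmin_r.
    assert (K * t * iv * (1/4) <= K * t * iv * y^2).
    { apply Rmult_le_compat_l; [nra|nra]. }
    nra.
Qed.

Lemma A_lb nu k3 t : 0 < nu -> 0 <= t ->
  (1/32) * Rmin (nu * (IZR k3)^2 * t^3) ((IZR k3)^2 * t / nu) <= nu * RInt (F1 nu k3) 0 t.
Proof.
  intros Hn Ht.
  assert (H := mono_lb (F1 nu k3) 0 (t/2) t (F1 nu k3 (t/2)) ltac:(lra)
     (F1_cont nu k3 ltac:(lra)) (fun x _ => F1_nonneg nu k3 x)
     (fun x Hx => F1_mono nu k3 (t/2) x Hn ltac:(lra))).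
  eapply Rle_trans; [| apply Rmult_le_compat_l; [lra | exact H]].
  unfold F1. destruct (one_m_exp (nu * t / 2) ltac:(nra)) as [H1 H2].
  replace (- nu * (t/2)) with (- (nu * t / 2)) by (field).
  idtac.
  apply key1; auto. apply pow2_ge_0.
Qed.

Lemma cos_int wc t : 0 < wc ->
  RInt (fun u => 2/3 * (1 - cos (wc * u))) 0 t = 2/3 * (t - sin (wc * t) / wc).
Proof.
  intros Hw.
  apply is_RInt_unique.
  replace (2/3 * (t - sin (wc * t) / wc)) with
    (minus (2/3 * (t - sin (wc * t) / wc)) (2/3 * (0 - sin (wc * 0) / wc))).
  2:{ unfold minus, plus, opp; simpl. rewrite Rmult_0_r, sin_0. field. lra. }
  apply (is_RInt_derive (fun u => 2/3 * (u - sin (wc * u) / wc))).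
  - intros x _. auto_derive; [auto | field; lra].
  - intros x _. apply (@ex_derive_continuous R_AbsRing R_NormedModule). auto_derive. auto.
Qed.

Lemma key2 wc t : 0 < wc -> 0 <= t ->
  Rmin (wc^2) 1 / 32 * Rmin (t^3) t <= 2/3 * (t - sin (wc * t) / wc).
Proof.
  intros Hw Ht. pose proof (xsin (wc * t) ltac:(nra)) as H.
  set (M := Rmin (wc^2) 1). set (m := Rmin (t^3) t).
  assert (HM1 : M <= wc^2) by apply Rmin_l. assert (HM2 : M <= 1) by apply Rmin_r.
  assert (HM0 : 0 <= M) by (unfold M; apply Rmin_glb; nra).
  assert (Hm1 : m <= t^3) by apply Rmin_l. assert (Hm2 : m <= t) by apply Rmin_r.
  assert (Hm0 : 0 <= m) by (unfold m; apply Rmin_glb; nra).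
  assert (Hx : wc * M * m <= Rmin ((wc*t)^3) (wc*t)).
  { apply Rmin_glb.
    - assert (wc * M * m <= wc * wc^2 * t^3).
      { apply Rmult_le_compat; nra. }
      nra.
    - assert (wc * M * m <= wc * 1 * t). { apply Rmult_le_compat; nra. } nra. }
  replace (2/3 * (t - sin (wc * t) / wc)) with (2/3 / wc * (wc * t - sin (wc * t))) by (field; lra).
  assert (Hiv : 0 < 2/3/wc) by (apply Rdiv_lt_0_compat; lra).
  assert (2/3/wc * (2/15 * (wc * M * m)) <= 2/3/wc * (wc * t - sin (wc * t))).
  { apply Rmult_le_compat_l; lra. }
  replace (2/3/wc * (2/15 * (wc * M * m))) with (4/45 * M * m) in H0 by (field; lra).
  nra.
Qed.

Lemma B_lb nu wc t : 0 < nu < 1 -> 0 < wc -> 0 <= t ->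
  Rmin (wc^2) 1 / 32 * Rmin (t^3) t <= RInt (G2 nu wc) 0 t.
Proof.
  intros Hn Hw Ht.
  set (M := Rmin (wc^2) 1). set (m := Rmin (t^3) t).
  assert (HM2 : M <= 1) by apply Rmin_r.
  assert (HM0 : 0 <= M) by (unfold M; apply Rmin_glb; nra).
  assert (Hm2 : m <= t) by apply Rmin_r.
  assert (Hm0 : 0 <= m) by (unfold m; apply Rmin_glb; nra).
  destruct (Rle_dec (nu * t) 1).
  - eapply Rle_trans; [apply key2; auto|].
    rewrite <- cos_int by auto.
    apply RInt_le; [lra | | |].
    + apply (@ex_RInt_continuous R_CompleteNormedModule). intros z _.
      apply (@ex_derive_continuous R_AbsRing R_NormedModule). auto_derive. auto.
    + apply (@ex_RInt_continuous R_CompleteNormedModule). intros z _. apply G2_cont.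
    + intros x Hx. rewrite G2_eq.
      assert (exp (-1) <= exp (- nu * x)) by (apply exp_le; nra).
      assert (exp (-1) = / exp 1) by apply exp_Ropp.
      pose proof exp_le_3. pose proof (exp_pos 1).
      assert (1/3 <= / exp 1) by (apply Rinv_le_contravar in H1; lra).
      pose proof (COS_bound (wc * x)).
      assert (HE : 1/3 <= exp (- nu * x)) by lra.
      assert (2 * (1/3) * (1 - cos (wc * x)) <= 2 * exp (- nu * x) * (1 - cos (wc * x))).
      { apply Rmult_le_compat_r; lra. }
      pose proof (pow2_ge_0 (1 - exp (- nu * x))). lra.
  - assert (H := mono_lb (G2 nu wc) 0 (t/2) t ((1/3)^2) ltac:(lra)
       (G2_cont nu wc) (fun x _ => G2_nonneg nu wc x)).
    assert (t / 2 * (1/3)^2 <= RInt (G2 nu wc) 0 t).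
    { replace (t/2 * (1/3)^2) with ((t - t/2) * (1/3)^2) by field. apply H.
      intros x Hx. eapply Rle_trans; [| apply G2_ge].
      destruct (one_m_exp (nu * x) ltac:(nra)) as [H1 H2].
      replace (- nu * x) with (- (nu * x)) by ring.
      assert (nu * (t/2) <= nu * x) by (apply Rmult_le_compat_l; lra).
      assert ((1/3)*(1+nu*x) <= (1 - exp (- (nu * x)))*(1+nu*x)) by lra.
      assert (1/3 <= 1 - exp (- (nu * x))) by (apply Rmult_le_reg_r with (1+nu*x); lra).
      apply pow_incr; lra. }
    assert (M * m <= 1 * t) by (apply Rmult_le_compat; lra).
    lra.
Qed.

Theorem mainTheorem7 (wc : R) (hwc : 0 < wc) :
  exists nu1 delta0 : R, 0 < nu1 /\ 0 < delta0 /\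
    forall (nu : R), 0 < nu < nu1 ->
    forall (k1 k2 k3 : Z), k3 <> 0%Z ->
      (forall s t : R, 0 <= s -> s < t -> S nu wc k1 k2 k3 t < S nu wc k1 k2 k3 s) /\
      (forall t : R, 0 <= t ->
         0 < S nu wc k1 k2 k3 t /\
         S nu wc k1 k2 k3 t <=
           exp (- delta0 * Rmin (nu * (IZR k3) ^ 2 * t ^ 3) ((IZR k3) ^ 2 * t / nu))
           * exp (- delta0 * nu * kperp2 k1 k2 * Rmin (t ^ 3) t)).
Proof.
  set (M := Rmin (wc^2) 1).
  assert (HM2 : M <= 1) by apply Rmin_r.
  assert (HM0 : 0 < M) by (unfold M; apply Rmin_glb_lt; nra).
  assert (Hw2 : 0 < 1 + wc^2) by nra.
  exists 1, (M / (32 * (1 + wc^2))).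
  assert (Hd0 : 0 < M / (32 * (1 + wc^2))) by (apply Rdiv_lt_0_compat; lra).
  assert (Hd1 : M / (32 * (1 + wc^2)) <= 1/32).
  { apply Rmult_le_reg_r with (32 * (1 + wc^2)); [lra|].
    unfold Rdiv. rewrite Rmult_assoc, Rinv_l by lra. nra. }
  split; [lra|]. split; [exact Hd0|].
  intros nu Hnu k1 k2 k3 Hk3.
  assert (Hnu0 : nu <> 0) by lra.
  assert (Hkp : 0 <= kperp2 k1 k2) by (unfold kperp2; pose proof (pow2_ge_0 (IZR k1)); pose proof (pow2_ge_0 (IZR k2)); lra).
  assert (Hden : 0 < nu^2 + wc^2) by nra.
  set (c := nu * kperp2 k1 k2 / (nu ^ 2 + wc ^ 2)).
  assert (Hc : 0 <= c) by (unfold c; apply Rdiv_le_0_compat; nra).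
  assert (HK : 0 < IZR k3 ^ 2).
  { assert (IZR k3 <> 0) by (apply not_0_IZR; auto). nra. }
  assert (ExF : forall a b, ex_RInt (F1 nu k3) a b)
    by (intros; apply (@ex_RInt_continuous R_CompleteNormedModule); intros; apply F1_cont; auto).
  assert (ExG : forall a b, ex_RInt (G2 nu wc) a b)
    by (intros; apply (@ex_RInt_continuous R_CompleteNormedModule); intros; apply G2_cont; auto).
  split.
  - intros s t Hs Hst. rewrite !S_eq by auto. fold c.
    rewrite <- (RInt_Chasles (F1 nu k3) 0 s t (ExF _ _) (ExF _ _)).
    rewrite <- (RInt_Chasles (G2 nu wc) 0 s t (ExG _ _) (ExG _ _)).
    unfold plus; simpl.
    set (m := (s + t) / 2).
    assert (HA := mono_lb (F1 nu k3) s m t (F1 nu k3 m) ltac:(unfold m; lra)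
       (F1_cont nu k3 Hnu0) (fun x _ => F1_nonneg nu k3 x)
       (fun x Hx => F1_mono nu k3 m x ltac:(lra) ltac:(unfold m in *; lra))).
    assert (HFm : 0 < F1 nu k3 m).
    { unfold F1. apply Rmult_lt_0_compat; auto.
      assert (exp (- nu * m) < 1).
      { rewrite <- exp_0. apply exp_increasing. unfold m; nra. }
      apply pow_lt. apply Rdiv_lt_0_compat; lra. }
    assert (0 < (t - m) * F1 nu k3 m) by (apply Rmult_lt_0_compat; [unfold m; lra | auto]).
    assert (HB : 0 <= RInt (G2 nu wc) s t)
      by (apply RInt_ge_0; [lra | auto | intros; apply G2_nonneg]).
    set (A0 := RInt (F1 nu k3) 0 s) in *. set (A1 := RInt (F1 nu k3) s t) in *.
    set (B0 := RInt (G2 nu wc) 0 s) in *. set (B1 := RInt (G2 nu wc) s t) in *.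
    assert (E1 : exp (- nu * (A0 + A1)) < exp (- nu * A0)) by (assert (0 < nu * A1) by (apply Rmult_lt_0_compat; lra); apply exp_increasing; lra).
    assert (E2 : exp (- c * (B0 + B1)) <= exp (- c * B0)) by (assert (0 <= c * B1) by (apply Rmult_le_pos; lra); apply exp_le; lra).
    pose proof (exp_pos (- nu * (A0 + A1))). pose proof (exp_pos (- c * (B0 + B1))).
    pose proof (exp_pos (- c * B0)).
    nra.
  - intros t Ht. rewrite S_eq by auto. fold c. split.
    + apply Rmult_lt_0_compat; apply exp_pos.
    + pose proof (A_lb nu k3 t ltac:(lra) Ht) as HA.
      pose proof (B_lb nu wc t Hnu hwc Ht) as HB. fold M in HB.
      set (d := M / (32 * (1 + wc^2))) in *.
      set (m1 := Rmin (nu * IZR k3 ^ 2 * t ^ 3) (IZR k3 ^ 2 * t / nu)) in *.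
      set (m2 := Rmin (t^3) t) in *.
      assert (Hm1 : 0 <= m1).
      { assert (0 <= t^3) by (apply pow_le; lra).
        unfold m1; apply Rmin_glb.
        - apply Rmult_le_pos; [apply Rmult_le_pos|]; lra.
        - apply Rdiv_le_0_compat; [apply Rmult_le_pos|]; lra. }
      assert (Hm2 : 0 <= m2) by (unfold m2; apply Rmin_glb; [apply pow_le|]; lra).
      apply Rmult_le_compat; try (left; apply exp_pos).
      * apply exp_le. nra.
      * apply exp_le.
        assert (Hd2 : d * (nu^2 + wc^2) <= M / 32).
        { unfold d. apply Rmult_le_reg_r with (32 * (1 + wc^2)); [lra|].
          replace (M / (32 * (1 + wc ^ 2)) * (nu ^ 2 + wc ^ 2) * (32 * (1 + wc ^ 2)))
            with (M * (nu^2 + wc^2)) by (field; lra).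
          replace (M / 32 * (32 * (1 + wc ^ 2))) with (M * (1 + wc^2)) by field.
          apply Rmult_le_compat_l; nra. }
        assert (d * nu * kperp2 k1 k2 * m2 = c * (d * (nu^2 + wc^2) * m2))
          by (unfold c; field; lra).
        assert (d * (nu^2 + wc^2) * m2 <= M / 32 * m2) by (apply Rmult_le_compat_r; lra).
        assert (c * (d * (nu^2 + wc^2) * m2) <= c * RInt (G2 nu wc) 0 t)
          by (apply Rmult_le_compat_l; lra).
        lra.
Qed.
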